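(* Let $k\ge 2$, $\tau=1000k$, $\rho=1-\frac{1}{10\tau}$, and let $g:\{0,1\}^n\to\{0,1\}$ be a $k$-term DNF. If $y^0\in\{0,1\}^n$ satisfies $g_{\le 1000\tau\log k}(y^0)=0$, then $T_\rho g(y^0)\le 0.1$.
   Context: $g_{\le L}$ is the sub-DNF of $g$ consisting of terms with at most $L$ literals. For $x\in\{0,1\}^n$, $\mathbf{y}\sim N_\rho(x)$ means each bit independently has $\mathbf{y}_i=x_i$ with probability $\rho$ and $\mathbf{y}_i=1-x_i$ with probability $1-\rho$. The noise operator is $T_\rho g(x)=\mathbb{E}_{\mathbf{y}\sim N_\rho(x)}[g(\mathbf{y})]$. *)

(* Defs.v *)
From HB Require Import structures.
From mathcomp Require Import all_boot all_order all_algebra.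
From mathcomp Require Import reals exp.
Set Implicit Arguments. Unset Strict Implicit. Unset Printing Implicit Defensive.
Import Order.TTheory GRing.Theory Num.Theory.
Local Open Scope ring_scope.

(* A literal over n variables: (i, b) means "x_i = b" (b = true: x_i, b = false: not x_i). *)
Notation dterm n := {set ('I_n * bool)}.
Notation dnf n := (seq (dterm n)).
Notation cube n := {ffun 'I_n -> bool}.

Definition term_sat n (t : dterm n) (x : cube n) : bool :=
  [forall l in t, x l.1 == l.2].

Definition dnf_eval n (g : dnf n) (x : cube n) : bool :=
  has (fun t => term_sat t x) g.

Definition dnf_trunc (R : realType) n (L : R) (g : dnf n) : dnf n :=
  filter (fun t : dterm n => (#|t|%:R <= L)) g.

(* Noise operator: T_rho g(x) = E_{y ~ N_rho(x)} [g(y)], where each bit y_i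
   independently equals x_i with prob. rho and 1 - x_i with prob. 1 - rho. *)
Definition noise_op (R : realType) n (rho : R) (g : dnf n) (x : cube n) : R :=
  \sum_(y : cube n)
     (\prod_(i < n) (if y i == x i then rho else 1 - rho)) * (dnf_eval g y)%:R.

(* Main.v *)
Require Import Defs.
From HB Require Import structures.
From mathcomp Require Import all_boot all_order all_algebra.
From mathcomp Require Import reals exp sequences.
From mathcomp Require Import ring lra.
Import Order.TTheory GRing.Theory Num.Theory.
Local Open Scope ring_scope.

Section Aux.
Variables (R : realType) (n : nat) (rho : R) (x0 : cube n).
Hypothesis rho_ge : 1/2 <= rho.
Hypothesis rho_le : rho <= 1.
Ltac lr := have := rho_ge; have := rho_le; lra.

Definition ww (i : 'I_n) (b : bool) : R := if b == x0 i then rho else 1 - rho.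
Definition cc (t : dterm n) (i : 'I_n) (b : bool) : bool :=
  [forall l in t, (l.1 == i) ==> (b == l.2)].
Definition ss t i : R := \sum_(b : bool) ww i b * (cc t i b)%:R.
Definition mm (t : dterm n) i : nat := #|[set l in t | l.1 == i]|.

Lemma ww_ge0 i b : 0 <= ww i b.
Proof. rewrite /ww; case: ifP => _; lr. Qed.
Lemma ww_le i b : ww i b <= rho.
Proof. rewrite /ww; case: ifP => _; lr. Qed.
Lemma ww_sum i : ww i true + ww i false = 1.
Proof. rewrite /ww; case: (x0 i) => /=; lra. Qed.

Lemma ss_bool t i : ss t i = ww i false * (cc t i false)%:R + ww i true * (cc t i true)%:R.
Proof. by rewrite /ss big_bool /= addrC. Qed.

Lemma ss_ge0 t i : 0 <= ss t i.
Proof.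
rewrite ss_bool; have := ww_ge0 i false; have := ww_ge0 i true.
by case: (cc t i false); case: (cc t i true) => /=; rewrite ?mulr1 ?mulr0; lra.
Qed.

Lemma ss_le1 t i : ss t i <= 1.
Proof.
rewrite ss_bool; have := ww_ge0 i false; have := ww_ge0 i true; have := ww_sum i.
by case: (cc t i false); case: (cc t i true) => /=; rewrite ?mulr1 ?mulr0; lra.
Qed.

Lemma sat_prod t y : ((term_sat t y)%:R : R) = \prod_i ((cc t i (y i))%:R : R).
Proof.
case E: (term_sat t y).
  rewrite big1 // => i _; suff -> : cc t i (y i) by [].
  apply/forallP => l; apply/implyP => lt; apply/implyP => /eqP <-.
  by move/forallP: E => /(_ l); rewrite lt.
move/negbT: E; rewrite /term_sat negb_forall => /existsP [l].
rewrite negb_imply => /andP [lt ne].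
rewrite (bigD1 l.1) //= ; suff -> : cc t l.1 (y l.1) = false by rewrite mul0r.
apply/negbTE; rewrite negb_forall; apply/existsP; exists l.
by rewrite lt eqxx /=.
Qed.

Lemma prob_term t :
  \sum_(y : cube n) (\prod_(i < n) (if y i == x0 i then rho else 1 - rho)) * (term_sat t y)%:R
  = \prod_i ss t i.
Proof.
rewrite /ss bigA_distr_bigA; apply: eq_bigr => y _.
by rewrite sat_prod -big_split.
Qed.

Lemma sum_mm t : (\sum_i mm t i)%N = #|t|.
Proof.
rewrite -sum1_card (partition_big fst predT) //=.
apply: eq_bigr => i _; rewrite /mm -sum1_card; apply: eq_bigl => l.
by rewrite inE.
Qed.

Lemma ss_le_mm t i : ss t i <= rho ^+ mm t i.
Proof.
case E: (mm t i) => [|m]; first by rewrite expr0 ss_le1.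
have : (0 < mm t i)%N by rewrite E.
rewrite /mm card_gt0 => /set0Pn [l]; rewrite inE => /andP [lt /eqP li].
have key b : cc t i b -> b = l.2.
  by move/forallP => /(_ l); rewrite lt li eqxx /= => /eqP.
have sub b : cc t i b -> ([set l in t | l.1 == i] \subset [set (i, b)]).
  move=> cb; apply/subsetP => l'; rewrite !inE => /andP [l't /eqP l'i].
  move/forallP: cb => /(_ l'); rewrite l't l'i eqxx /= => /eqP ->.
  by rewrite -l'i -surjective_pairing.
have rpos : 0 <= rho by lr.
case cT: (cc t i true); case cF: (cc t i false).
- by have := key _ cT; have := key _ cF; congruence.
- have := subset_leq_card (sub _ cT); rewrite cards1 -/(mm t i) E ltnS leqn0 => /eqP m0.
  rewrite m0 expr1 ss_bool cT cF /= mulr0 add0r mulr1; exact: ww_le.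
- have := subset_leq_card (sub _ cF); rewrite cards1 -/(mm t i) E ltnS leqn0 => /eqP m0.
  rewrite m0 expr1 ss_bool cT cF /= mulr0 addr0 mulr1; exact: ww_le.
- by rewrite ss_bool cT cF /= !mulr0 addr0 exprn_ge0.
Qed.

Lemma prob_big t : \prod_i ss t i <= rho ^+ #|t|.
Proof.
rewrite -sum_mm -prodrXr; apply: ler_prod => i _.
by rewrite ss_ge0 ss_le_mm.
Qed.

Lemma prob_small (t : dterm n) l : l \in t -> x0 l.1 != l.2 -> \prod_i ss t i <= 1 - rho.
Proof.
move=> lt ne; rewrite (bigD1 l.1) //=.
have h1 : ss t l.1 <= 1 - rho.
  have cx : cc t l.1 (x0 l.1) = false.
    apply/negbTE; rewrite negb_forall; apply/existsP; exists l.
    by rewrite lt eqxx.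
  rewrite ss_bool /ww; case: (x0 l.1) cx => -> /=; rewrite mulr0 ?addr0 ?add0r;
  case: (cc _ _ _); rewrite /= ?mulr1 ?mulr0; lr.
have h2 : \prod_(i | i != l.1) ss t i <= 1.
  by apply: prodr_ile1 => i _; rewrite ss_ge0 ss_le1.
have h3 : 0 <= \prod_(i | i != l.1) ss t i by apply: prodr_ge0 => i _; exact: ss_ge0.
have := ss_ge0 t l.1; nra.
Qed.

End Aux.

Lemma big_term_bound (R : realType) (k m : nat) : (2 <= k)%N ->
  let tau : R := 1000 * k%:R in
  1000 * tau * ln (k%:R : R) < m%:R ->
  (1 - 1 / (10 * tau)) ^+ m <= 1 / (10 * k%:R).
Proof.
move=> k2 tau hm.
have K2 : (2 : R) <= k%:R by rewrite (ler_nat R 2 k).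
have tge : 2000 <= tau by rewrite /tau; lra.
have tpos : 0 < tau by lra.
set x := 1 / (10 * tau).
have xpos : 0 < x by rewrite /x divr_gt0 //; lra.
have xle : x <= 1 by rewrite /x ler_pdivrMr; lra.
have h1 : (1 - x) ^+ m <= expR (- x) ^+ m.
  apply: lerXn2r; rewrite ?nnegrE; [lra| exact: ltW (expR_gt0 _)|].
  by have := expR_ge1Dx (- x); lra.
have h2 : expR (- x) ^+ m = expR (- x * m%:R) by rewrite expRM_natr.
have h3 : - x * m%:R <= - (100%:R * ln (k%:R : R)).
  have -> : 100%:R * ln (k%:R : R) = x * (1000 * tau * ln (k%:R : R)).
    rewrite /x; field; lra.
  rewrite mulNr lerN2; apply: ltW; rewrite ltr_pM2l //.
have h4 : expR (- (100%:R * ln (k%:R : R))) = ((k%:R : R) ^+ 100)^-1.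
  by rewrite expRN expRM_natl lnK // posrE ltr0n ltnW.
apply: (le_trans h1); rewrite h2; apply: (le_trans (_ : _ <= expR (- (100%:R * ln (k%:R : R))))).
  by rewrite ler_expR.
rewrite h4 div1r lef_pV2 ?posrE; last 2 first.
- by apply: exprn_gt0; rewrite ltr0n (ltnW k2).
- by rewrite -natrM ltr0n muln_gt0 (ltnW k2).
rewrite -natrX -natrM ler_nat.
rewrite expnSr leq_mul2r; apply/orP; right.
apply: (@leq_trans (2 ^ 4)) => //.
apply: (@leq_trans (k ^ 4)); first by rewrite (leq_exp2r 2 k (isT : (0 < 4)%N)).
by apply: leq_pexp2l; [exact: ltnW k2|].
Qed.

Lemma union_nat (n : nat) (R : realType) (g : dnf n) y :
  ((dnf_eval g y)%:R : R) <= \sum_(t <- g) (term_sat t y)%:R.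
Proof.
elim: g => [|t g IH]; first by rewrite big_nil.
rewrite big_cons /dnf_eval /=; case: (term_sat t y) => /=.
  rewrite lerDl; apply: sumr_ge0 => ? _; exact: ler0n.
by rewrite add0r.
Qed.

Lemma sum_seq_bound (R : realType) (T : eqType) (s : seq T) (F : T -> R) (c : R) :
  (forall t, t \in s -> F t <= c) -> \sum_(t <- s) F t <= (size s)%:R * c.
Proof.
elim: s => [|a s IH] h; first by rewrite big_nil mul0r.
rewrite big_cons /= -addn1 natrD mulrDl mul1r addrC lerD //.
  by apply: IH => t ts; apply: h; rewrite inE ts orbT.
by apply: h; rewrite inE eqxx.
Qed.

Theorem claim6p5 (R : realType) (n k : nat) (g : dnf n) (y0 : cube n) :
  (2 <= k)%N -> (size g <= k)%N ->
  let tau : R := 1000 * k%:R in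
  let rho : R := 1 - 1 / (10 * tau) in
  dnf_eval (dnf_trunc (1000 * tau * ln (k%:R : R)) g) y0 = false ->
  noise_op rho g y0 <= 1 / 10.
Proof.
move=> k2 sg tau rho htr.
have K2 : (2 : R) <= k%:R by rewrite (ler_nat R 2 k).
have tge : 2000 <= tau by rewrite /tau; lra.
set x := 1 / (10 * tau).
have rhoE : rho = 1 - x by [].
have xpos : 0 < x by rewrite /x divr_gt0 //; lra.
have yp : (0 : R) < 1 / (10 * k%:R) by apply: divr_gt0; lra.
have xE : x = 1 / (10 * k%:R) / 1000.
  rewrite /x /tau; field; rewrite pnatr_eq0 -lt0n; exact: ltnW k2.
have xle : x <= 1 / (10 * k%:R) by lra.
have rho_ge : 1/2 <= rho.
  rewrite rhoE; have : 1 / (10 * k%:R) <= (1/20 : R).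
    rewrite ler_pdivrMr; last lra.
    rewrite mulrC mulrA ler_pdivlMr; lra.
  lra.
have rho_le : rho <= 1 by rewrite rhoE; lra.
have wpos (y : cube n) : 0 <= \prod_(i < n) (if y i == y0 i then rho else 1 - rho).
  apply: prodr_ge0 => i _; exact: (@ww_ge0 R n rho y0 rho_ge rho_le i (y i)).
apply: (@le_trans _ _ (\sum_(t <- g) \prod_i ss R n rho y0 t i)).
  rewrite /noise_op.
  have E : \sum_(t <- g) \prod_i ss R n rho y0 t i = \sum_(t <- g) \sum_(y : cube n)
     (\prod_(i < n) (if y i == y0 i then rho else 1 - rho)) * (term_sat t y)%:R.
    by apply: eq_bigr => t _; rewrite prob_term.
  rewrite E.
  rewrite exchange_big /=; apply: ler_sum => y _.
  rewrite -mulr_sumr; apply: ler_wpM2l; first exact: wpos.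
  exact: union_nat.
apply: (@le_trans _ _ ((size g)%:R * (1 / (10 * k%:R)))).
  apply: sum_seq_bound => t tg.
  have H := htr; move/negbT: H; rewrite /dnf_eval /dnf_trunc => /hasPn /(_ t).
  rewrite mem_filter tg andbT => H.
  case: (boolP (#|t|%:R <= 1000 * tau * ln (k%:R : R))) => hs.
    have ns := H hs.
    move: ns; rewrite /term_sat negb_forall => /existsP [l].
    rewrite negb_imply => /andP [lt ne].
    have := @prob_small R n rho y0 rho_ge rho_le t l lt ne; rewrite -/rho rhoE.
    have -> : 1 - (1 - x) = x by ring.
    move=> h; exact: le_trans h xle.
  apply: (le_trans (@prob_big R n rho y0 rho_ge rho_le t)).
  apply: big_term_bound => //; rewrite -/tau; move: hs; rewrite -ltNge.
  exact.
have sgR : ((size g)%:R : R) <= k%:R by rewrite ler_nat.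
have e : k%:R * (1 / (10 * k%:R)) = (1 / 10 : R).
  by field; rewrite pnatr_eq0 -lt0n; exact: ltnW k2.
rewrite -e; apply: ler_wpM2r => //; exact: ltW yp.
Qed.
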